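(* Let $\varepsilon>0$, $\alpha=\varepsilon/(2M)$, $\eta=\alpha/(L+\alpha)$, $y_0\in\mathrm{dom}\, h$. Run MDA: $s_0=\nabla f(y_0)$, $x_0=\mathrm{argmin}_{x}\{\langle s_0,x\rangle+h^\alpha(x)\}$, and for $k\ge0$, $s_{k+1}=(1-\eta)s_k+\eta\nabla f(x_k)$, $x_{k+1}=\mathrm{argmin}_{x}\{\langle s_{k+1},x\rangle+h^\alpha(x)\}$; and define $y_{k+1}=(1-\eta)y_k+\eta x_{k+1}$ for $k\ge 0$. Let $\Gamma_k$ be the ACP model induced by $(y_0,\{x_i\}_{i=0}^{k-1},(\eta,\dots,\eta))$. Then the pair $(y_k,\Gamma_k)$ is an $\varepsilon$-certificate for the problem $\min_x \phi(x)$ after $k=\tilde{\mathcal{O}}(1+ML\varepsilon^{-1})$ iterations.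
   Context: Let $\|\cdot\|$ be a norm on $\mathbb{R}^n$ with dual norm $\|\cdot\|_*$. Let $f:\mathbb{R}^n\to\mathbb{R}$ be convex, differentiable and $L$-smooth ($L>0$) with respect to $\|\cdot\|$, $h:\mathbb{R}^n\to(-\infty,\infty]$ closed proper convex with bounded domain, and $w:\mathbb{R}^n\to[0,+\infty]$ closed, $1$-strongly convex with respect to $\|\cdot\|$ on $\mathrm{dom}\, h$, with $M:=\max_{x\in\mathrm{dom}\, h}w(x)<\infty$. Let $\phi=f+h$, $h^\alpha=h+\alpha w$, $\phi^\alpha=f+h^\alpha$. Write $\ell_f(x;x_0)=f(x_0)+\langle\nabla f(x_0),x-x_0\rangle$. The ACP model induced by $(y_0,\{x_i\}_{i=0}^{k-1},\zeta)$, $\zeta\in[0,1]^k$, is defined by $\Gamma_0(x)=h^\alpha(x)+\ell_f(x;y_0)$, $\Gamma_{j+1}(x)=(1-\zeta_j)\Gamma_j(x)+\zeta_j(h^\alpha(x)+\ell_f(x;x_j))$. For $u\in\mathrm{dom}\, h$ and $\alpha\le\varepsilon/(2M)$, the pair $(u,\Gamma_k)$ is called an $\varepsilon$-certificate if $\phi^\alpha(u)-\min_{x\in\mathbb{R}^n}\Gamma_k(x)\leq\varepsilon/2$. The notation $\tilde{\mathcal{O}}$ hides logarithmic factors (in $\varepsilon$ and the initial gap). *)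

(* Defs.v *)
From HB Require Import structures.
From mathcomp Require Import all_boot all_order all_algebra.
From mathcomp Require Import all_classical all_reals all_analysis.
Set Implicit Arguments. Unset Strict Implicit. Unset Printing Implicit Defensive.
Import Order.TTheory GRing.Theory Num.Theory.
Import numFieldNormedType.Exports.
Local Open Scope classical_set_scope.
Local Open Scope ring_scope.

Section Defs.
Variables (R : realType) (n : nat).
Notation vec := 'rV[R]_n.

Definition dot (u v : vec) : R := \sum_(i < n) u ord0 i * v ord0 i.

Definition is_norm (nrm : vec -> R) : Prop :=
  [/\ forall x, 0 <= nrm x,
      forall x, nrm x = 0 -> x = 0,
      forall (a : R) x, nrm (a *: x) = `|a| * nrm x
    & forall x y, nrm (x + y) <= nrm x + nrm y].

Definition dual_norm (nrm : vec -> R) (s : vec) : R :=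
  sup [set dot s x | x in [set x | nrm x <= 1]].

Definition grad (f : vec -> R) (x : vec) : vec :=
  \row_(j < n) ('d f x (delta_mx ord0 j : vec)).

Definition convex_fun (f : vec -> R) : Prop :=
  forall x y (t : R), 0 <= t <= 1 ->
    f (t *: x + (1 - t) *: y) <= t * f x + (1 - t) * f y.

Definition smooth_wrt (nrm : vec -> R) (L : R) (f : vec -> R) : Prop :=
  forall x y, dual_norm nrm (grad f x - grad f y) <= L * nrm (x - y).

Definition edom (h : vec -> \bar R) : set vec := [set x | (h x < +oo)%E].

Definition closed_efun (h : vec -> \bar R) : Prop :=
  closed [set p : vec * R | (h p.1 <= p.2%:E)%E].

Definition proper_efun (h : vec -> \bar R) : Prop :=
  (forall x, h x != -oo%E) /\ (exists x, (h x < +oo)%E).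

Definition convex_efun (h : vec -> \bar R) : Prop :=
  forall x y (t : R), 0 <= t <= 1 ->
    (h (t *: x + (1 - t) *: y)%R <= t%:E * h x + (1 - t)%:E * h y)%E.

Definition bounded_dom (nrm : vec -> R) (h : vec -> \bar R) : Prop :=
  exists B : R, forall x, edom h x -> nrm x <= B.

Definition strongly_convex_on (nrm : vec -> R) (mu : R) (D : set vec)
    (w : vec -> \bar R) : Prop :=
  forall x y (t : R), D x -> D y -> 0 <= t <= 1 ->
    (w (t *: x + (1 - t) *: y)%R <=
       t%:E * w x + (1 - t)%:E * w y - (mu / 2 * t * (1 - t) * nrm (x - y) ^+ 2)%:E)%E.

Definition halpha (h w : vec -> \bar R) (alpha : R) (x : vec) : \bar R :=
  (h x + alpha%:E * w x)%E.

Definition phialpha (f : vec -> R) (h w : vec -> \bar R) (alpha : R) (x : vec)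
  : \bar R := ((f x)%:E + halpha h w alpha x)%E.

Definition lin (f : vec -> R) (x0 x : vec) : R := f x0 + dot (grad f x0) (x - x0).

Fixpoint acp_model (f : vec -> R) (h w : vec -> \bar R) (alpha : R) (y0 : vec)
    (xs : nat -> vec) (zeta : nat -> R) (k : nat) (x : vec) : \bar R :=
  match k with
  | 0 => (halpha h w alpha x + (lin f y0 x)%:E)%E
  | j.+1 => ((1 - zeta j)%:E * acp_model f h w alpha y0 xs zeta j x
             + (zeta j)%:E * (halpha h w alpha x + (lin f (xs j) x)%:E))%E
  end.

(* minimum value of a model (infimum over R^n; it is attained) *)
Definition emin (G : vec -> \bar R) : \bar R := ereal_inf (range G).

Definition eps_certificate (f : vec -> R) (h w : vec -> \bar R) (M alpha eps : R)
    (u : vec) (G : vec -> \bar R) : Prop :=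
  [/\ edom h u, alpha <= eps / (2 * M)
    & (phialpha f h w alpha u - emin G <= (eps / 2)%:E)%E].

End Defs.

(* Main.v *)
Require Import Defs.
From HB Require Import structures.
From mathcomp Require Import all_boot all_order all_algebra.
From mathcomp Require Import all_classical all_reals all_analysis.
From mathcomp Require Import ring lra.
Set Implicit Arguments. Unset Strict Implicit. Unset Printing Implicit Defensive.
Import Order.TTheory GRing.Theory Num.Theory.
Import numFieldNormedType.Exports.
Local Open Scope classical_set_scope.
Local Open Scope ring_scope.

Lemma entry_le (R : realType) (n : nat) (x : 'rV[R]_n) j : `|x ord0 j| <= `|x|.
Proof.
by rewrite [leRHS]/Num.Def.normr /= mx_normrE; apply/bigmax_geP; right => /=; exists (ord0, j).
Qed.

Lemma nrm0 (R : realType) (n : nat) (nrm : 'rV[R]_n -> R) : is_norm nrm -> nrm 0 = 0.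
Proof. case=> _ _ hZ _; by rewrite -(scale0r (0 : 'rV[R]_n)) hZ normr0 mul0r. Qed.

Lemma nrm_sum (R : realType) (n : nat) (nrm : 'rV[R]_n -> R) : is_norm nrm ->
  forall (I : Type) (r : seq I) (F : I -> 'rV[R]_n),
  nrm (\sum_(i <- r) F i) <= \sum_(i <- r) nrm (F i).
Proof.
move=> Hn I r F; have [h0 _ _ htri] := Hn.
elim: r => [|a r IH]; first by rewrite !big_nil (nrm0 Hn).
by rewrite !big_cons (le_trans (htri _ _)) // lerD2l.
Qed.

Definition Kn (R : realType) (n : nat) (nrm : 'rV[R]_n -> R) :=
  \sum_(j < n) nrm (delta_mx ord0 j) + 1.

Lemma Kn_gt0 (R : realType) (n : nat) (nrm : 'rV[R]_n -> R) : is_norm nrm -> 0 < Kn nrm.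
Proof.
move=> Hn; rewrite /Kn ltr_pwDr // ?ltr01 //; apply: sumr_ge0 => j _; by case: Hn.
Qed.

Lemma nrm_ub (R : realType) (n : nat) (nrm : 'rV[R]_n -> R) : is_norm nrm ->
  forall x : 'rV[R]_n, nrm x <= Kn nrm * `|x|.
Proof.
move=> Hn x; have [h0 _ hZ _] := Hn.
rewrite {1}(row_sum_delta x) (le_trans (nrm_sum Hn _ _)) //.
rewrite /Kn mulrDl mul1r big_distrl /=.
rewrite -[leLHS]addr0; apply: lerD; last exact: normr_ge0.
apply: ler_sum => j _; rewrite hZ mulrC ler_wpM2l //; last exact: entry_le.
Qed.

Lemma nrm_lip (R : realType) (n : nat) (nrm : 'rV[R]_n -> R) : is_norm nrm ->
  forall x y : 'rV[R]_n, `|nrm x - nrm y| <= Kn nrm * `|x - y|.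
Proof.
move=> Hn x y; have [h0 _ hZ htri] := Hn.
have nN z : nrm (- z) = nrm z by rewrite -scaleN1r hZ normrN1 mul1r.
have h1 := htri (x - y) y. rewrite subrK in h1.
have h2 := htri (y - x) x. rewrite subrK -(opprB x y) nN in h2.
have h3 := nrm_ub Hn (x - y).
rewrite ler_norml; apply/andP; split; lra.
Qed.

Lemma nrm_cont (R : realType) (n : nat) (nrm : 'rV[R]_n -> R) : is_norm nrm ->
  continuous nrm.
Proof.
move=> Hn x; apply/(@cvgrPdist_lt _ _ _ (nbhs x) (nbhs_filter x)) => e e0.
apply/nbhs_ballP; exists (e / Kn nrm) => /=; first by rewrite divr_gt0 // Kn_gt0.
move=> y; rewrite mx_norm_ball /ball_ /= => Hy.
apply: le_lt_trans (nrm_lip Hn _ _) _.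
by rewrite mulrC -ltr_pdivlMr ?Kn_gt0.
Qed.

Lemma nrm_lb (R : realType) (n : nat) (nrm : 'rV[R]_n -> R) : is_norm nrm ->
  exists2 c, 0 < c & forall x : 'rV[R]_n, c * `|x| <= nrm x.
Proof.
move=> Hn; have [h0 h0' hZ htri] := Hn.
pose S := [set x : 'rV[R]_n | `|x| = 1].
have [[z Sz]|S0] := pselect (S !=set0); last first.
  exists 1 => // x; rewrite mul1r.
  have [->|xn0] := eqVneq x 0; first by rewrite normr0 h0.
  exfalso; apply: S0; exists (`|x|^-1 *: x).
  rewrite /S /= normrZ normrV ?unitfE ?normr_eq0 // normr_id mulVf //.
  by rewrite normr_eq0.
have cS : compact S.
  apply: bounded_closed_compact.
    exists 1; split => // M M1 x Sx; move: Sx; rewrite /S /= => ->; exact: ltW.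
  have -> : S = (fun x : 'rV[R]_n => `|x|) @^-1` [set 1] by [].
  apply: preimage_closed; last exact: closed_eq.
  move=> x _; exact: norm_continuous.
have [c cS' cmin] := compact_EVT_min (ex_intro _ z Sz) cS
  (continuous_subspaceT (nrm_cont Hn)).
have Sc : S c by rewrite inE in cS'.
have c0 : 0 < nrm c.
  rewrite lt_def h0 andbT; apply/eqP => /h0' c0; move: Sc; rewrite /S /= c0 normr0.
  by move/eqP; rewrite eq_sym oner_eq0.
exists (nrm c) => // x.
have [->|xn0] := eqVneq x 0; first by rewrite normr0 mulr0 h0.
have xp : 0 < `|x| by rewrite normr_gt0.
have Sx : S (`|x|^-1 *: x).
  by rewrite /S /= normrZ normrV ?unitfE ?normr_eq0 // normr_id mulVf // gt_eqF.
have := cmin _ (mem_set Sx); rewrite hZ normrV ?unitfE ?gt_eqF // normr_id.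
by move=> H; rewrite -ler_pdivlMr // mulrC.
Qed.

Lemma dotDl (R : realType) (n : nat) (u v z : 'rV[R]_n) : dot (u + v) z = dot u z + dot v z.
Proof. by rewrite /dot -big_split; apply: eq_bigr => j _; rewrite mxE mulrDl. Qed.
Lemma dotZl (R : realType) (n : nat) (a : R) (u z : 'rV[R]_n) : dot (a *: u) z = a * dot u z.
Proof. by rewrite /dot mulr_sumr; apply: eq_bigr => j _; rewrite mxE mulrA. Qed.
Lemma dotDr (R : realType) (n : nat) (u v z : 'rV[R]_n) : dot z (u + v) = dot z u + dot z v.
Proof. by rewrite /dot -big_split; apply: eq_bigr => j _; rewrite mxE mulrDr. Qed.
Lemma dotZr (R : realType) (n : nat) (a : R) (u z : 'rV[R]_n) : dot z (a *: u) = a * dot z u.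
Proof. by rewrite /dot mulr_sumr; apply: eq_bigr => j _; rewrite mxE mulrCA. Qed.
Lemma dotNr (R : realType) (n : nat) (u z : 'rV[R]_n) : dot z (- u) = - dot z u.
Proof. by rewrite -scaleN1r dotZr mulN1r. Qed.
Lemma dotBr (R : realType) (n : nat) (u v z : 'rV[R]_n) : dot z (u - v) = dot z u - dot z v.
Proof. by rewrite dotDr dotNr. Qed.
Lemma dotNl (R : realType) (n : nat) (u z : 'rV[R]_n) : dot (- u) z = - dot u z.
Proof. by rewrite -scaleN1r dotZl mulN1r. Qed.
Lemma dotBl (R : realType) (n : nat) (u v z : 'rV[R]_n) : dot (u - v) z = dot u z - dot v z.
Proof. by rewrite dotDl dotNl. Qed.
Lemma dot0r (R : realType) (n : nat) (z : 'rV[R]_n) : dot z 0 = 0.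
Proof. by rewrite -(scale0r (0 : 'rV[R]_n)) dotZr mul0r. Qed.

Lemma dot_le_norm (R : realType) (n : nat) (u z : 'rV[R]_n) :
  dot u z <= (\sum_(j < n) `|u ord0 j|) * `|z|.
Proof.
rewrite /dot mulr_suml; apply: ler_sum => j _.
apply: le_trans (ler_norm _) _; rewrite normrM ler_wpM2l //; exact: entry_le.
Qed.

Lemma diff_dot (R : realType) (n : nat) (f : 'rV[R]_n -> R) x d :
  'd f x d = dot (grad f x) d.
Proof.
rewrite {1}(row_sum_delta d) linear_sum /dot; apply: eq_bigr => j _.
by rewrite linearZ /= /grad mxE mulrC.
Qed.

Lemma dot_le_dual (R : realType) (n : nat) (nrm : 'rV[R]_n -> R) : is_norm nrm ->
  forall u z, dot u z <= dual_norm nrm u * nrm z.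
Proof.
move=> Hn u z; have [h0 h0' hZ htri] := Hn.
have [c c0 hc] := nrm_lb Hn.
pose A := [set dot u x | x in [set x | nrm x <= 1]].
have hA : has_sup A.
  split; first by exists (dot u 0); exists 0 => //=; rewrite (nrm0 Hn).
  exists ((\sum_(j < n) `|u ord0 j|) / c) => _ [x /= x1 <-].
  apply: le_trans (dot_le_norm _ _) _; rewrite ler_pdivlMr // -mulrA.
  rewrite -[leRHS]mulr1; apply: ler_wpM2l; first by apply: sumr_ge0 => j _.
  by rewrite mulrC (le_trans (hc x)).
have [->|zn0] := eqVneq z 0; first by rewrite dot0r (nrm0 Hn) mulr0.
have zp : 0 < nrm z by rewrite lt_def h0 andbT; apply/eqP => /h0'; apply/eqP.
have : dot u ((nrm z)^-1 *: z) <= dual_norm nrm u.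
  apply: sup_upper_bound => //; exists ((nrm z)^-1 *: z) => //=.
  by rewrite hZ ger0_norm ?invr_ge0 ?h0 // mulVf ?gt_eqF.
by rewrite dotZr => H; rewrite -ler_pdivrMr // mulrC.
Qed.

Lemma line_derive (R : realType) (n : nat) (f : 'rV[R]_n -> R) :
  (forall x, differentiable f x) -> forall (x d : 'rV[R]_n) (t : R),
  is_derive t 1 (fun s : R => f (s *: d + x)) (dot (grad f (t *: d + x)) d).
Proof.
move=> fd x d t.
pose g := fun s : R => f (s *: d + x).
have E : (fun h : R => h^-1 *: ((g \o shift t) (h *: 1) - g t)) =
    (fun h : R => h^-1 *: ((f \o shift (t *: d + x)) (h *: d) - f (t *: d + x))).
  apply: funext => h /=; congr (_ *: (f _ - _)).
  by rewrite scalerDl /GRing.scale /= mulr1 addrA.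
apply: DeriveDef.
  rewrite /derivable -/g E; exact: diff_derivable.
rewrite /derive -/g E; rewrite -[lim _]/(derive f (t *: d + x) d).
by rewrite deriveE // diff_dot.
Qed.

Lemma poly_derive (R : realType) (a c s : R) :
  is_derive s (1 : R) (a *: (@id R) + c *: ((@id R) * (@id R)))
    (a *: 1 + c *: (id s *: 1 + id s *: 1)).
Proof. exact: _. Qed.

Lemma descent (R : realType) (n : nat) (f : 'rV[R]_n -> R)
  (nrm : 'rV[R]_n -> R) (L : R) (x y : 'rV[R]_n) :
  (forall x, differentiable f x) ->
  is_norm nrm -> 0 <= L -> smooth_wrt nrm L f ->
  f y <= f x + dot (grad f x) (y - x) + L / 2 * nrm (y - x) ^+ 2.
Proof.
move=> fd Hn L0 Hs.
set d := y - x; set a := dot (grad f x) d; set N := nrm d.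
set c := L / 2 * N ^+ 2.
pose g := fun s : R => f (s *: d + x).
pose p := a *: (@id R) + c *: ((@id R) * (@id R)).
pose dphi := fun s : R => dot (grad f (s *: d + x)) d - (a *: 1 + c *: (id s *: 1 + id s *: 1)).
have hd : forall s, is_derive s (1 : R) (g - p) (dphi s).
  move=> s; apply: is_deriveB; first exact: line_derive.
have hc : {within `[0, 1], continuous (g - p)}.
  apply: derivable_within_continuous => s _; exact: (@ex_derive _ _ _ _ _ _ _ (hd s)).
have [xi xiI] := MVT ltr01 (fun s _ => hd s) hc.
have xi0 : 0 <= xi by move: xiI; rewrite in_itv /= => /andP[/ltW].
have g1 : (g - p) 1 = f y - (a + c).
  change (f (1 *: d + x) - (a * 1 + c * (1 * 1)) = f y - (a + c)).
  by rewrite scale1r /d subrK !mulr1.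
have g0 : (g - p) 0 = f x.
  change (f (0 *: d + x) - (a * 0 + c * (0 * 0)) = f x).
  by rewrite scale0r add0r !mulr0 addr0 subr0.
rewrite g1 g0 subr0 mulr1 /dphi.
change (f y - (a + c) - f x = dot (grad f (xi *: d + x)) d - (a * 1 + c * (xi * 1 + xi * 1))
  -> f y <= f x + a + c).
rewrite !mulr1.
have Hb : dot (grad f (xi *: d + x)) d - a <= L * xi * N ^+ 2.
  rewrite /a -dotBl; apply: le_trans (dot_le_dual Hn _ _) _.
  have := Hs (xi *: d + x) x; rewrite addrK => H.
  have [h0 _ hZ _] := Hn.
  apply: le_trans (ler_wpM2r (h0 _) H) _.
  by rewrite hZ ger0_norm // -/N expr2 !mulrA.
move=> E.
have : f y - (a + c) - f x <= 0.
  rewrite E; rewrite /c; lra.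
lra.
Qed.
Lemma final_bound (R : realType) (eta D eps : R) (k : nat) :
  0 < eta -> eta < 1 -> 0 <= D -> 0 < eps ->
  1 + ln (1 + D / eps) <= eta * k%:R -> (1 - eta) ^+ k * D <= eps / 2.
Proof.
move=> e0 e1 D0 eps0 Hk.
have h1 : (1 - eta) ^+ k <= expR (- (eta * k%:R)).
  rewrite mulrC -mulrN expRM_natl; apply: lerXn2r.
  - by rewrite nnegrE subr_ge0 ltW.
  - by rewrite nnegrE expR_ge0.
  by have := expR_ge1Dx (- eta); rewrite addrC.
have Dp : 0 < 1 + D / eps by rewrite ltr_pwDl // divr_ge0 // ltW.
have h2 : expR (- (eta * k%:R)) <= expR (-1) / (1 + D / eps).
  rewrite -[X in _ / X](lnK (x := 1 + D / eps)) ?posrE // -expRN -expRD ler_expR.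
  lra.
have he : 2 <= expR (1 : R) by have := expR_ge1Dx (1 : R); rewrite (_ : 1 + 1 = 2 :> R) //.
have h3 : D / (1 + D / eps) <= eps.
  rewrite ler_pdivrMr // mulrDr mulr1 mulrCA divff ?gt_eqF // mulr1; lra.
apply: le_trans (ler_wpM2r D0 (le_trans h1 h2)) _.
rewrite expRN mulrAC -mulrA mulrC.
apply: le_trans (ler_wpM2r _ h3) _ ; first by rewrite invr_ge0 expR_ge0.
rewrite ler_pM2l // lef_pV2 ?posrE ?expR_gt0 //.
Qed.

Fixpoint cseq (R : realType) (n : nat) (f : 'rV[R]_n -> R) (y0 : 'rV[R]_n)
  (x : nat -> 'rV[R]_n) (eta : R) (k : nat) : R :=
  match k with
  | 0 => f y0 - dot (grad f y0) y0
  | j.+1 => (1 - eta) * cseq f y0 x eta j + eta * (f (x j) - dot (grad f (x j)) (x j))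
  end.

Lemma lim_lemma (R : realType) (A B q : R) : 0 <= q ->
  (forall t, 0 < t -> t <= 1 -> A <= B - q * (1 - t)) -> A <= B - q.
Proof.
move=> q0 H; rewrite leNgt; apply/negP => hlt.
have d0 : 0 < A - B + q by lra.
have qp : 0 < q.
  rewrite lt_def q0 andbT; apply/eqP => q00; have := H 1 ltr01 (lexx _).
  rewrite q00; lra.
pose t := (A - B + q) / (A - B + q + q).
have tp : 0 < t by rewrite divr_gt0 //; lra.
have t1 : t <= 1.
  rewrite /t ler_pdivrMr; lra.
have := H t tp t1.
have : q * t < A - B + q.
  rewrite /t mulrA ltr_pdivrMr; nra.
lra.
Qed.

Unset Implicit Arguments.

Theorem theorem3p2 (R : realType) :
  exists C : R, 0 < C /\
  forall (n : nat) (nrm : 'rV[R]_n -> R) (f : 'rV[R]_n -> R)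
    (h w : 'rV[R]_n -> \bar R) (L M eps : R),
    is_norm nrm ->
    (forall x, differentiable f x) -> convex_fun f ->
    0 < L -> smooth_wrt nrm L f ->
    proper_efun h -> closed_efun h -> convex_efun h -> bounded_dom nrm h ->
    (forall x, (0 <= w x)%E) -> closed_efun w ->
    strongly_convex_on nrm 1 (edom h) w ->
    (exists2 x, edom h x & w x = M%:E) ->
    (forall x, edom h x -> (w x <= M%:E)%E) ->
    0 < M ->
    0 < eps ->
    forall (alpha eta : R), alpha = eps / (2 * M) -> eta = alpha / (L + alpha) ->
    forall (y0 : 'rV[R]_n) (s x y : nat -> 'rV[R]_n),
      edom h y0 ->
      s 0%N = grad f y0 ->
      (forall k z, ((dot (s k) (x k))%:E + halpha h w alpha (x k)
                    <= (dot (s k) z)%:E + halpha h w alpha z)%E) ->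
      (forall k, s k.+1 = (1 - eta) *: s k + eta *: grad f (x k)) ->
      y 0%N = y0 ->
      (forall k, y k.+1 = (1 - eta) *: y k + eta *: x k.+1) ->
      forall D : R,
        (phialpha f h w alpha y0 - emin (acp_model f h w alpha y0 x (fun _ => eta) 0)
           <= D%:E)%E ->
        forall k : nat,
          C * (1 + M * L / eps) * (1 + ln (1 + D / eps)) <= k%:R ->
          eps_certificate f h w M alpha eps (y k)
            (acp_model f h w alpha y0 x (fun _ => eta) k).
Proof.
exists 2; split => //.
move=> n nrm f h w L M eps Hn fd fconv L0 Hs [hNy hex] hcl hconv hbd w0 wcl wsc
  [xM xMd wxM] wle M0 e0 alpha eta Ha He y0 s x y y0d s0 Hmin Hs1 Hy0 Hy1 D HD k Hk.
have a0 : 0 < alpha by rewrite Ha divr_gt0 // mulr_gt0.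
have La0 : 0 < L + alpha by rewrite addr_gt0.
have eta0 : 0 < eta by rewrite He divr_gt0.
have eta1 : eta < 1 by rewrite He ltr_pdivrMr // mul1r ltrDr.
have etaL : eta * L = (1 - eta) * alpha.
  by rewrite He; field; rewrite gt_eqF.
pose hr z := fine (h z). pose wr z := fine (w z).
pose Hr z := hr z + alpha * wr z.
have hE : forall z, edom h z -> h z = (hr z)%:E.
  move=> z; rewrite /edom /= /hr; move: (hNy z); case: (h z) => //.
have wE : forall z, edom h z -> w z = (wr z)%:E.
  move=> z /wle; move: (w0 z); rewrite /wr; case: (w z) => //.
have haE : forall z, edom h z -> halpha h w alpha z = (Hr z)%:E.
  by move=> z zd; rewrite /halpha hE // wE.
have hinf : forall z, ~ edom h z -> h z = +oo%E.
  move=> z; rewrite /edom /=; move: (hNy z); case: (h z) => //= r _.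
  by move=> H; exfalso; apply: H; rewrite ltry.
have haI : forall z, ~ edom h z -> halpha h w alpha z = +oo%E.
  move=> z zd; rewrite /halpha hinf // addye //.
  have : (0 <= alpha%:E * w z)%E by apply: mule_ge0 => //; rewrite lee_fin ltW.
  by case: (alpha%:E * w z)%E.
have domC : forall p q t, edom h p -> edom h q -> 0 <= t <= 1 ->
    edom h (t *: p + (1 - t) *: q).
  move=> p q t pd qd t01; rewrite /edom /=.
  apply: le_lt_trans (hconv p q t t01) _.
  by rewrite hE // hE // -!EFinM -EFinD ltry.
have Hsc : forall p q t, edom h p -> edom h q -> 0 <= t <= 1 ->
   Hr (t *: p + (1 - t) *: q) <= t * Hr p + (1 - t) * Hr q
     - alpha / 2 * t * (1 - t) * nrm (p - q) ^+ 2.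
  move=> p q t pd qd t01; have pqd := domC p q t pd qd t01.
  have H1 := hconv p q t t01.
  rewrite !hE // -!EFinM -EFinD lee_fin in H1.
  have H2 := wsc p q t pd qd t01.
  rewrite !wE // -!EFinM -EFinD lee_fin in H2.
  have H3 := ler_wpM2l (ltW a0) H2.
  rewrite /Hr; lra.
pose c := cseq f y0 x eta.
pose G := acp_model f h w alpha y0 x (fun _ => eta).
have Gam : forall k z, (edom h z -> G k z = (Hr z + dot (s k) z + c k)%:E) /\
    (~ edom h z -> G k z = +oo%E).
  move=> k0 z; elim: k0 => [|k0 [IH1 IH2]].
    split => zd; rewrite /G /=.
      rewrite haE // -EFinD; congr (_%:E); rewrite /lin s0 dotBr /c /=; lra.
    by rewrite haI // addye.
  split => zd; rewrite /G /= -/G.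
    rewrite IH1 // haE // -EFinD; congr (_%:E).
    rewrite Hs1 dotDl !dotZl /lin dotBr /c /=; lra.
  rewrite IH2 // haI // addye // !gt0_muley ?lte_fin ?subr_gt0 //.
have xd : forall k, edom h (x k).
  move=> k0; apply: contrapT => nd; have := Hmin k0 xM.
  by rewrite haI // haE // addey // -EFinD leye_eq.
have Hminr : forall k z, edom h z ->
    dot (s k) (x k) + Hr (x k) <= dot (s k) z + Hr z.
  by move=> k0 z zd; have := Hmin k0 z; rewrite !haE // -!EFinD lee_fin.
pose m k := Hr (x k) + dot (s k) (x k) + c k.
have Emin : forall k, emin (G k) = (m k)%:E.
  move=> k0; rewrite /emin; apply/eqP; rewrite eq_le; apply/andP; split.
    by apply: ereal_inf_lbound; exists (x k0) => //; rewrite (Gam k0 (x k0)).1.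
  apply: le_ereal_inf_tmp => _ [z _ <-].
  have [zd|zd] := pselect (edom h z).
    rewrite (Gam k0 z).1 // lee_fin /m; have := Hminr k0 z zd; lra.
  by rewrite (Gam k0 z).2 // leey.
have SM : forall k z, edom h z ->
    Hr (x k) + dot (s k) (x k) + alpha / 2 * nrm (z - x k) ^+ 2 <= Hr z + dot (s k) z.
  move=> k0 z zd.
  suff : Hr (x k0) + dot (s k0) (x k0) <= Hr z + dot (s k0) z - alpha / 2 * nrm (z - x k0) ^+ 2.
    lra.
  apply: lim_lemma; first by rewrite mulr_ge0 ?sqr_ge0 // divr_ge0 // ltW.
  move=> t t0 t1.
  have t01 : 0 <= t <= 1 by rewrite ltW.
  have H1 := Hminr k0 _ (domC _ _ _ zd (xd k0) t01).
  have H2 := Hsc _ _ _ zd (xd k0) t01.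
  rewrite dotDr !dotZr in H1.
  have : t * (Hr (x k0) + dot (s k0) (x k0)) <=
      t * (Hr z + dot (s k0) z - alpha / 2 * nrm (z - x k0) ^+ 2 * (1 - t)).
    lra.
  by rewrite ler_pM2l.
have yd : forall k, edom h (y k).
  elim => [|k0 IH]; first by rewrite Hy0.
  rewrite Hy1.
  have := domC (y k0) (x k0.+1) (1 - eta) IH (xd _).
  rewrite (_ : 1 - (1 - eta) = eta); last by lra.
  apply; apply/andP; split; lra.
pose gap k := f (y k) + Hr (y k) - m k.
have rec : forall k, gap k.+1 <= (1 - eta) * gap k.
  move=> k0.
  have E1 : m k0.+1 = (1 - eta) * (Hr (x k0.+1) + dot (s k0) (x k0.+1) + c k0)
      + eta * (Hr (x k0.+1) + f (x k0) + dot (grad f (x k0)) (x k0.+1 - x k0)).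
    rewrite /m Hs1 dotDl !dotZl /c /= dotBr; lra.
  have SM1 := SM k0 (x k0.+1) (xd _).
  have DS := descent (x k0) (x k0.+1) fd Hn (ltW L0) Hs.
  have t01 : 0 <= 1 - eta <= 1 by apply/andP; split; lra.
  have FC := fconv (y k0) (x k0.+1) (1 - eta) t01.
  have HC := Hsc _ _ _ (yd k0) (xd k0.+1) t01.
  rewrite (_ : 1 - (1 - eta) = eta) in FC HC; last by lra.
  rewrite -Hy1 in FC HC.
  set P := nrm (x k0.+1 - x k0) ^+ 2 in SM1 DS.
  have P0 : 0 <= P by rewrite sqr_ge0.
  have Q0 : 0 <= alpha / 2 * (1 - eta) * eta * nrm (y k0 - x k0.+1) ^+ 2.
    apply: mulr_ge0; last exact: sqr_ge0.
    apply: mulr_ge0; last exact: ltW.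
    apply: mulr_ge0; last lra.
    by apply: divr_ge0; [exact: ltW|].
  have e1' : 0 <= 1 - eta by lra.
  have SM' := ler_wpM2l e1' SM1.
  have DS' := ler_wpM2l (ltW eta0) DS.
  have EQ : eta * L * P = (1 - eta) * alpha * P by rewrite etaL.
  rewrite /gap E1 /m; lra.
have gpow : forall k, gap k <= (1 - eta) ^+ k * gap 0%N.
  elim => [|k0 IH]; first by rewrite expr0 mul1r.
  apply: le_trans (rec k0) _; rewrite exprS -mulrA ler_wpM2l //; lra.
have g0D : gap 0%N <= D.
  move: HD; rewrite /phialpha haE // Emin -EFinD -?EFinB lee_fin /gap Hy0.
  by [].
have g00 : 0 <= gap 0%N.
  have := Hminr 0%N y0 y0d; rewrite /gap /m Hy0 s0 /c /=; lra.
have lam0 : 0 <= 1 + ln (1 + D / eps).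
  have : 0 <= ln (1 + D / eps).
    apply: ln_ge0; rewrite lerDl divr_ge0 //; [lra | exact: ltW].
  lra.
have key : 1 <= eta * (2 * (1 + M * L / eps)).
  have -> : eta * (2 * (1 + M * L / eps)) = 1 + eta.
    rewrite He Ha; field.
    by rewrite !gt_eqF // addr_gt0 // !mulr_gt0.
  lra.
have Hk' : 1 + ln (1 + D / eps) <= eta * k%:R.
  have := ler_wpM2l (ltW eta0) Hk; rewrite !mulrA.
  have := ler_wpM2r lam0 key; rewrite mul1r !mulrA.
  lra.
split => //; first by rewrite Ha.
rewrite /phialpha haE // Emin -EFinD -?EFinB lee_fin.
have FB := final_bound eta0 eta1 (le_trans g00 g0D) e0 Hk'.
have e1' : 0 <= 1 - eta by lra.
have := gpow k; have := ler_wpM2l (exprn_ge0 k e1') g0D.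
rewrite /gap; lra.
Qed.
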